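(* Let ${\mathbb X}$ be a real inner product space with ${\mathbb X}\ne\{0\}$, let $M\colon[0,\infty)\times[0,\infty)\to[0,\infty)$ be symmetric and moderately increasing, and suppose $\rho_M(x,y)=\dfrac{\Vert x-y\Vert}{M(\Vert x\Vert,\Vert y\Vert)}$ is a metric on ${\mathbb X}$. Then $\rho_M$ is locally star--shaped.
   Context: Convention $0/0=0$. A function $f\colon[0,\infty)\to[0,\infty)$ is moderately increasing if it is increasing and $f(t)/t$ is decreasing; $M$ is moderately increasing if $M(x,\cdot)$ and $M(\cdot,x)$ are moderately increasing for each fixed $x$. A metric $d$ is locally star--shaped if for every $x$ there is $r_0>0$ such that for every $0<r<r_0$ the ball $B_d(x,r)=\{y: d(x,y)<r\}$ is star--shaped with respect to $x$, i.e. every ray emanating from $x$ meets $\partial B_d(x,r)$ exactly once. *)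

(* Defs.v *)
From HB Require Import structures.
From mathcomp Require Import all_boot all_order all_algebra.
From mathcomp Require Import reals.
Set Implicit Arguments. Unset Strict Implicit. Unset Printing Implicit Defensive.
Import Order.TTheory GRing.Theory Num.Theory.
Local Open Scope ring_scope.

Definition is_inner_product (R : realType) (V : lmodType R) (ip : V -> V -> R) : Prop :=
  [/\ (forall x y, ip x y = ip y x),
      (forall (a : R) x y z, ip (a *: x + y) z = a * ip x z + ip y z),
      (forall x, 0 <= ip x x) &
      (forall x, ip x x = 0 -> x = 0)].

Definition ipnorm (R : realType) (V : lmodType R) (ip : V -> V -> R) (x : V) : R :=
  Num.sqrt (ip x x).

Definition moderately_increasing (R : realType) (f : R -> R) : Prop :=
  (forall s t, 0 <= s -> s <= t -> f s <= f t) /\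
  (forall s t, 0 < s -> s <= t -> f t / t <= f s / s).

Definition moderately_increasing2 (R : realType) (M : R -> R -> R) : Prop :=
  forall x, 0 <= x ->
    moderately_increasing (fun t => M x t) /\ moderately_increasing (fun t => M t x).

(* rho_M(x,y) = ||x - y|| / M(||x||, ||y||)  (x / 0 = 0 in MathComp, i.e. 0/0 = 0). *)
Definition rhoM (R : realType) (V : lmodType R) (ip : V -> V -> R)
    (M : R -> R -> R) (x y : V) : R :=
  ipnorm ip (x - y) / M (ipnorm ip x) (ipnorm ip y).

Definition is_metric (T : Type) (R : realType) (d : T -> T -> R) : Prop :=
  [/\ (forall x y, 0 <= d x y),
      (forall x y, d x y = 0 <-> x = y),
      (forall x y, d x y = d y x) &
      (forall x y z, d x z <= d x y + d y z)].

Definition on_ball_boundary (R : realType) (V : lmodType R) (ip : V -> V -> R)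
    (d : V -> V -> R) (x : V) (r : R) (y : V) : Prop :=
  forall e : R, 0 < e ->
    (exists z, ipnorm ip (z - y) < e /\ d x z < r) /\
    (exists w, ipnorm ip (w - y) < e /\ ~ (d x w < r)).

Definition ball_star_shaped (R : realType) (V : lmodType R) (ip : V -> V -> R)
    (d : V -> V -> R) (x : V) (r : R) : Prop :=
  forall u : V, u <> 0 ->
    exists t : R, (0 <= t /\ on_ball_boundary ip d x r (x + t *: u)) /\
      forall t' : R, 0 <= t' -> on_ball_boundary ip d x r (x + t' *: u) -> t' = t.

Definition locally_star_shaped (R : realType) (V : lmodType R) (ip : V -> V -> R)
    (d : V -> V -> R) : Prop :=
  forall x : V, exists r0 : R, 0 < r0 /\
    forall r : R, 0 < r -> r < r0 -> ball_star_shaped ip d x r.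

(* Main.v *)
Require Import Defs.
From HB Require Import structures.
From mathcomp Require Import all_boot all_order all_algebra.
From mathcomp Require Import reals.
Import Order.TTheory GRing.Theory Num.Theory.
Local Open Scope ring_scope.
From mathcomp Require Import classical_sets.
From mathcomp Require Import ring lra.
Local Open Scope classical_set_scope.
Local Open Scope ring_scope.

Lemma sup_ray (R : realType) (f : R -> R) (r B : R) :
  f 0 < r -> 0 < B -> (forall t, B <= t -> ~ f t < r) ->
  let c := sup (fun t => 0 <= t /\ f t < r) in
  [/\ 0 <= c, c <= B, (forall t, c < t -> ~ f t < r) &
      (forall t, t < c -> exists2 t2, t < t2 & t2 <= c /\ 0 <= t2 /\ f t2 < r)].
Proof.
move=> f0 B0 HB c.
set S : set R := (fun t => 0 <= t /\ f t < r).
have S0 : S 0 by split.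
have ubB : ubound S B.
  move=> t [t0 ft]; rewrite leNgt; apply/negP => Bt.
  by apply: (HB t) => //; rewrite ltW.
have hub : has_ubound S by exists B.
have ne : S !=set0 by exists 0.
have cub := ub_le_sup hub.
split.
- exact: (cub 0 S0).
- exact: ge_sup.
- move=> t ct ft; have : t <= c.
    apply: (cub); split => //; apply: le_trans (ltW ct); exact: cub.
  by rewrite leNgt ct.
- move=> t tc; have [y [y0 fy] ty] := sup_gt ne tc.
  by exists y => //; split => //; exact: cub.
Qed.


Lemma MI_ratio (R : realType) (f : R -> R) : moderately_increasing f ->
  forall s s', 0 < s -> s <= s' -> f s' * s <= f s * s'.
Proof.
move=> [_ H] s s' s0 ss'; have s'0 : 0 < s' by apply: lt_le_trans ss'.
have h := H s s' s0 ss'.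
by rewrite ler_pdivrMr // mulrAC ler_pdivlMr // in h.
Qed.

Section IP.
Variables (R : realType) (V : lmodType R) (ip : V -> V -> R).
Hypothesis Hip : is_inner_product ip.
Local Notation N := (ipnorm ip).

Lemma ipC x y : ip x y = ip y x. Proof. by case: Hip. Qed.
Lemma ipL a x y z : ip (a *: x + y) z = a * ip x z + ip y z. Proof. by case: Hip. Qed.
Lemma ip0l z : ip 0 z = 0.
Proof. have := ipL 1 0 0 z; rewrite scaler0 addr0 mul1r => h; lra. Qed.
Lemma ipDl x y z : ip (x + y) z = ip x z + ip y z.
Proof. by have := ipL 1 x y z; rewrite scale1r mul1r. Qed.
Lemma ipZl a x z : ip (a *: x) z = a * ip x z.
Proof. by have := ipL a x 0 z; rewrite addr0 ip0l addr0. Qed.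
Lemma ipNl x z : ip (- x) z = - ip x z.
Proof. by rewrite -scaleN1r ipZl mulN1r. Qed.
Lemma ipDr x y z : ip z (x + y) = ip z x + ip z y.
Proof. by rewrite ipC ipDl ![ip _ z]ipC. Qed.
Lemma ipZr a x z : ip z (a *: x) = a * ip z x.
Proof. by rewrite ipC ipZl ipC. Qed.
Lemma ipNr x z : ip z (- x) = - ip z x.
Proof. by rewrite ipC ipNl ipC. Qed.
Lemma ipxx_ge0 x : 0 <= ip x x. Proof. by case: Hip. Qed.
Lemma ipxx_eq0 x : ip x x = 0 -> x = 0. Proof. by case: Hip => _ _ _; apply. Qed.

Lemma N_ge0 x : 0 <= N x. Proof. exact: sqrtr_ge0. Qed.
Lemma N_sqr x : N x ^+ 2 = ip x x. Proof. by rewrite sqr_sqrtr // ipxx_ge0. Qed.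
Lemma N0 : N 0 = 0. Proof. by rewrite /ipnorm ip0l sqrtr0. Qed.
Lemma N_eq0 x : N x = 0 -> x = 0.
Proof. move=> h; apply: ipxx_eq0; by rewrite -N_sqr h expr0n. Qed.
Lemma N_gt0 x : x <> 0 -> 0 < N x.
Proof. move=> h; rewrite lt_neqAle N_ge0 andbT; apply/eqP => e; apply: h; exact: N_eq0. Qed.
Lemma NZ a x : N (a *: x) = `|a| * N x.
Proof. by rewrite /ipnorm ipZl ipZr mulrA -expr2 sqrtrM ?sqrtr_sqr // sqr_ge0. Qed.
Lemma NN x : N (- x) = N x.
Proof. by rewrite -scaleN1r NZ normrN normr1 mul1r. Qed.
Lemma NB x y : N (x - y) = N (y - x).
Proof. by rewrite -NN opprB. Qed.

Lemma ip_expand x y : ip (x + y) (x + y) = ip x x + 2 * ip x y + ip y y.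
Proof. rewrite ipDl !ipDr [ip y x]ipC; ring. Qed.

Lemma ip0r z : ip z 0 = 0. Proof. by rewrite ipC ip0l. Qed.

Lemma CS x y : ip x y <= N x * N y.
Proof.
have [->|y0] := eqVneq y 0; first by rewrite ip0r N0 mulr0.
have b0 : 0 < ip y y by rewrite -N_sqr exprn_gt0 // N_gt0 //; exact/eqP.
have h := ipxx_ge0 (ip y y *: x + (- ip x y) *: y).
rewrite ipDl !ipDr !ipZl !ipZr [ip y x]ipC in h.
have h2 : ip x y ^+ 2 <= (N x * N y) ^+ 2.
  rewrite exprMn !N_sqr.
  have h' : 0 <= ip y y * (ip y y * ip x x - ip x y ^+ 2).
    by rewrite [X in 0 <= X](_ : _ = ip y y * (ip y y * ip x x) + ip y y * (- ip x y * ip x y) +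
    (- ip x y * (ip y y * ip x y) + - ip x y * (- ip x y * ip y y))) //; ring.
  by move: h'; rewrite pmulr_rge0 // subr_ge0 mulrC.
have P0 : 0 <= N x * N y by rewrite mulr_ge0 // N_ge0.
move: h2 P0; set P := N x * N y; set c := ip x y => h2 P0.
have [c0|c0] := lerP c 0; first by lra.
rewrite -(ler_pXn2r (_ : 0 < 2)%N) ?nnegrE //; lra.
Qed.

Lemma N_tri x y : N (x + y) <= N x + N y.
Proof.
have h : N (x + y) ^+ 2 <= (N x + N y) ^+ 2.
  rewrite sqrrD !N_sqr ip_expand; have := CS x y; lra.
rewrite -(ler_pXn2r (_ : 0 < 2)%N) ?nnegrE ?addr_ge0 ?N_ge0 //.
Qed.

Lemma N_rev x y : N x - N y <= N (x - y).
Proof. have := N_tri (x - y) y; rewrite subrK; lra. Qed.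


Lemma Nray x u s t : N ((x + s *: u) - (x + t *: u)) = `|s - t| * N u.
Proof. by rewrite opprD addrACA subrr add0r -scalerBl NZ. Qed.

Lemma Nsub0 y : N (y - y) = 0.
Proof. by rewrite subrr N0. Qed.

Lemma ray_unique (dd : V -> V -> R) (x u : V) (r c : R) :
 u <> 0 -> 0 <= c ->
 (forall t, 0 <= t -> t < c -> exists2 e, 0 < e &
     forall w, N (w - (x + t *: u)) < e -> dd x w < r) ->
 (forall t, 0 <= t -> (t < c \/ t = 0) -> dd x (x + t *: u) < r) ->
 (forall t, c < t -> exists2 e, 0 < e &
     forall z, N (z - (x + t *: u)) < e -> ~ dd x z < r) ->
 exists t : R, (0 <= t /\ on_ball_boundary ip dd x r (x + t *: u)) /\
   forall t' : R, 0 <= t' -> on_ball_boundary ip dd x r (x + t' *: u) -> t' = t.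
Proof.
move=> u0 c0 H1 H2 H3.
have Nu0 := N_gt0 u u0.
exists c; split.
  split => // e e0.
  set de := e / (2 * N u).
  have de0 : 0 < de by rewrite divr_gt0 // mulr_gt0.
  have deN : de * N u = e / 2.
    rewrite /de; field; by rewrite gt_eqF.
  split.
    have [cz|cpos] := lerP c 0.
      have -> : c = 0 by apply/eqP; rewrite eq_le cz c0.
      exists (x + 0 *: u); split; first by rewrite Nsub0.
      by apply: H2 => //; right.
    set dl := Num.min (c / 2) de.
    have dl0 : 0 < dl by rewrite lt_min de0 divr_gt0.
    have dlc : dl <= c / 2 by rewrite ge_min lexx.
    have dld : dl <= de by rewrite ge_min lexx orbT.
    exists (x + (c - dl) *: u); split.
      rewrite Nray (_ : c - dl - c = - dl); last by ring.
      rewrite normrN gtr0_norm //.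
      have : dl * N u <= de * N u by rewrite ler_pM2r.
      lra.
    apply: H2; first lra.
    left; lra.
  exists (x + (c + de) *: u); split.
    rewrite Nray (_ : c + de - c = de); last by ring.
    rewrite gtr0_norm // deN; lra.
  have [e' e'0 He'] := H3 (c + de) ltac:(lra).
  by apply: He'; rewrite Nsub0.
move=> t' t'0 Hb.
case: (ltgtP t' c) => [lt|gt|->//].
  have [e e0 He] := H1 t' t'0 lt.
  have [_ [w [Hw1 Hw2]]] := Hb e e0.
  by case: Hw2; apply: He.
have [e e0 He] := H3 t' gt.
have [[z [Hz1 Hz2]] _] := Hb e e0.
by case: (He z Hz1).
Qed.


Lemma cont_up (g : R -> R) x y r : moderately_increasing g ->
  (forall s, 0 < s -> 0 < g s) -> 0 < N y -> N (x - y) / g (N y) < r ->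
  exists2 e, 0 < e & forall w, N (w - y) < e -> N (x - w) / g (N w) < r.
Proof.
move=> Hg gpos s0 H.
set s := N y in s0 H *; set d := N (x - y) in H; set m := g s in H.
have m0 : 0 < m by exact: gpos.
rewrite ltr_pdivrMr // in H.
have d0 : 0 <= d by exact: N_ge0.
have rm0 : 0 < r * m by lra.
exists (s * (r * m - d) / (s + r * m)).
  by apply: divr_gt0; [apply: mulr_gt0 => //; lra | lra].
move=> w; set e := N (w - y) => He.
rewrite ltr_pdivlMr ?addr_gt0 // in He.
have e0 : 0 <= e by exact: N_ge0.
have dw : N (x - w) <= d + e.
  by have := N_tri (x - y) (y - w); rewrite addrA subrK -/d [N (y - w)]NB -/e.
have sw : s - e <= N w.
  have := N_rev y w; rewrite -/s NB -/e; lra.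
have sw0 : 0 < N w by nra.
have gw0 := gpos _ sw0.
have Gs : m * (s - e) <= g (N w) * s.
  have [le|lt] := lerP s (N w).
    have := (proj1 Hg) s (N w) (ltW s0) le; rewrite -/m => h.
    have := N_ge0 (w - y); rewrite -/e => e0'; nra.
  have := @MI_ratio _ g Hg (N w) s sw0 (ltW lt); rewrite -/m => h; nra.
rewrite ltr_pdivrMr //.
have r0 : 0 < r by rewrite -(pmulr_lgt0 _ m0).
have h1 : N (x - w) * s <= (d + e) * s by rewrite ler_wpM2r // ltW.
have h2 : (d + e) * s < r * (m * (s - e)) by nra.
have h3 : r * (m * (s - e)) <= r * (g (N w) * s) by rewrite ler_wpM2l // ltW.
have : N (x - w) * s < r * g (N w) * s by rewrite -mulrA; lra.
by rewrite ltr_pM2r.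
Qed.

Lemma cont_lo (g : R -> R) x y r : moderately_increasing g ->
  (forall s, 0 < s -> 0 < g s) -> 0 < N y -> 0 < r -> r < N (x - y) / g (N y) ->
  exists2 e, 0 < e & forall w, N (w - y) < e -> ~ N (x - w) / g (N w) < r.
Proof.
move=> Hg gpos s0 r0 H.
set s := N y in s0 H *; set d := N (x - y) in H; set m := g s in H.
have m0 : 0 < m by exact: gpos.
rewrite ltr_pdivlMr // in H.
have d0 : 0 <= d by exact: N_ge0.
have rm0 : 0 < r * m by nra.
exists (Num.min (s / 2) (s * (d - r * m) / (s + r * m))).
  rewrite lt_min; apply/andP; split; first by lra.
  by apply: divr_gt0; [apply: mulr_gt0 => //; lra | lra].
move=> w; set e := N (w - y); rewrite lt_min => /andP[He1 He].
rewrite ltr_pdivlMr ?addr_gt0 // in He.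
have e0 : 0 <= e by exact: N_ge0.
have dw : d - e <= N (x - w).
  have := N_tri (x - w) (w - y); rewrite -/e addrA subrK -/d; lra.
have sw : N w <= s + e.
  have := N_tri (w - y) y; rewrite subrK -/s -/e; lra.
have sw' : s - e <= N w.
  have := N_rev y w; rewrite -/s NB -/e; lra.
have sw0 : 0 < N w by lra.
have gw0 := gpos _ sw0.
have Gs : g (N w) * s <= m * (s + e).
  have [le|lt] := lerP (N w) s.
    have := (proj1 Hg) (N w) s (ltW sw0) le; rewrite -/m => h.
    nra.
  have := @MI_ratio _ g Hg s (N w) s0 (ltW lt); rewrite -/m => h; nra.
apply/negP; rewrite -leNgt ler_pdivlMr //.
have h1 : (d - e) * s <= N (x - w) * s by rewrite ler_wpM2r // ltW.
have h2 : r * (m * (s + e)) <= (d - e) * s by nra.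
have h3 : r * (g (N w) * s) <= r * (m * (s + e)) by rewrite ler_wpM2l // ltW.
have : r * g (N w) * s <= N (x - w) * s by rewrite -mulrA; lra.
by rewrite ler_pM2r.
Qed.


Lemma Nray0 x u t : N (x - (x + t *: u)) = `|t| * N u.
Proof. by rewrite opprD addrA subrr add0r NN NZ. Qed.

Lemma Nray0' x u t : N ((x + t *: u) - x) = `|t| * N u.
Proof. by rewrite NB Nray0. Qed.

Lemma x_neq_oppx (x : V) : x <> 0 -> x <> - x.
Proof.
move=> x0 h; apply: x0; have : (2%:R : R) *: x = 0 by rewrite scaler_nat mulr2n {2}h subrr.
by move/eqP; rewrite scaler_eq0 pnatr_eq0 /= => /eqP.
Qed.

Variable (M : R -> R -> R).
Hypothesis HM0 : forall s t, 0 <= s -> 0 <= t -> 0 <= M s t.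
Hypothesis HMI : moderately_increasing2 M.
Hypothesis Hmet : is_metric (rhoM ip M).
Local Notation rho := (rhoM ip M).

Lemma rho_xx x : rho x x = 0.
Proof. by case: Hmet => _ h _ _; apply/h. Qed.

Lemma Mpos_xy x y : x <> y -> 0 < M (N x) (N y).
Proof.
move=> xy; rewrite lt_neqAle HM0 ?N_ge0 // andbT; apply/eqP => h.
case: Hmet => _ h0 _ _; apply: xy; apply/h0.
by rewrite /rhoM -h invr0 mulr0.
Qed.


Lemma gpos x : x <> 0 -> forall s, 0 < s -> 0 < M (N x) s.
Proof.
move=> x0 s s0.
have a0 : 0 < N x := N_gt0 _ x0.
have Hg := (@HMI (N x) (N_ge0 x)).1.
have m0 : 0 < M (N x) (N x) by have := Mpos_xy _ _ (x_neq_oppx _ x0); rewrite NN.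
have [le|lt] := lerP (N x) s.
  exact: lt_le_trans m0 ((proj1 Hg) _ _ (ltW a0) le).
have := @MI_ratio _ _ Hg s (N x) s0 (ltW lt) => h.
have : 0 < M (N x) s * N x by apply: lt_le_trans h; rewrite mulr_gt0.
by rewrite pmulr_lgt0.
Qed.

Lemma ray_mono x u t t' : x <> 0 -> u <> 0 -> 0 <= t -> t < t' ->
  t' * N u <= N x / 2 -> rho x (x + t *: u) < rho x (x + t' *: u).
Proof.
move=> x0 u0 t0 tt' t'B.
have a0 : 0 < N x := N_gt0 _ x0.
have Nu0 : 0 < N u := N_gt0 _ u0.
have Hg := (@HMI (N x) (N_ge0 x)).1.
have t'0 : 0 < t' by apply: le_lt_trans tt'.
rewrite /rhoM !Nray0 !ger0_norm ?(ltW t'0) //.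
set a := N x in a0 t'B *.
set s := N (x + t *: u); set s' := N (x + t' *: u).
have sge : a - t * N u <= s.
  have := N_rev x (x + t *: u); rewrite Nray0 ger0_norm // -/a -/s; lra.
have s'ge : a - t' * N u <= s'.
  have := N_rev x (x + t' *: u); rewrite Nray0 ger0_norm ?(ltW t'0) // -/a -/s'; lra.
have tNu : t * N u <= t' * N u by rewrite ler_pM2r // ltW.
have s0 : 0 < s by nra.
have s'0 : 0 < s' by nra.
have G0 := gpos _ x0 _ s0.
have G'0 := gpos _ x0 _ s'0.
have key : t * M a s' < t' * M a s.
  have [le|lt] := lerP s' s.
    have := (proj1 Hg) _ _ (ltW s'0) le => h.
    have : t * M a s' <= t * M a s by rewrite ler_wpM2l.
    have : t * M a s < t' * M a s by rewrite ltr_pM2r.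
    lra.
  have ratio := @MI_ratio _ _ Hg s s' s0 (ltW lt).
  set p := ip x u.
  have es : s ^+ 2 = a ^+ 2 + 2 * t * p + t ^+ 2 * N u ^+ 2.
    rewrite /s /a !N_sqr ip_expand !ipZr !ipZl /p; ring.
  have es' : s' ^+ 2 = a ^+ 2 + 2 * t' * p + t' ^+ 2 * N u ^+ 2.
    rewrite /s' /a !N_sqr ip_expand !ipZr !ipZl /p; ring.
  have tq : (t' * N u) ^+ 2 <= (a / 2) ^+ 2.
    rewrite ler_pXn2r ?nnegrE //; [nra | lra].
  have pos : 0 < a ^+ 2 + t' * p.
    have : 0 <= s' ^+ 2 by rewrite sqr_ge0.
    rewrite es' exprMn in tq *; nra.
  have diff : (t' * s) ^+ 2 - (t * s') ^+ 2 =
              (t' - t) * ((t' - t) * a ^+ 2 + 2 * t * (a ^+ 2 + t' * p)).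
    rewrite !exprMn es es'; ring.
  have dpos : 0 < (t' * s) ^+ 2 - (t * s') ^+ 2.
    rewrite diff; apply: mulr_gt0; first lra.
    apply: ltr_pwDl; first by rewrite mulr_gt0 ?subr_gt0 // exprn_gt0.
    by apply: mulr_ge0; [apply: mulr_ge0 | apply: ltW].
  have ts : t * s' < t' * s.
    rewrite -(ltr_pXn2r (_ : 0 < 2)%N) ?nnegrE ?mulr_ge0 ?(ltW t'0) ?(ltW s0) ?(ltW s'0) //.
    lra.
  have h1 : t * (M a s' * s) <= t * (M a s * s') by rewrite ler_wpM2l.
  have h2 : M a s * (t * s') < M a s * (t' * s) by rewrite ltr_pM2l.
  have : (t * M a s') * s < (t' * M a s) * s.
    apply: le_lt_trans (_ : t * (M a s * s') < _).
      by rewrite -mulrA.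
    by move: h2; rewrite mulrCA [X in _ < X]mulrCA -!mulrA [X in _ < X]mulrCA.
  by rewrite ltr_pM2r.
rewrite ltr_pdivrMr // mulrAC ltr_pdivlMr //.
nra.
Qed.


Lemma Nray_lb x u t : 0 <= t -> N x - t * N u <= N (x + t *: u).
Proof. move=> t0; have := N_rev x (x + t *: u); rewrite Nray0 ger0_norm //; lra. Qed.

Lemma far x y : x <> 0 -> N x / 3 <= N (y - x) ->
  N x / (4 * M (N x) (N x)) <= rho x y.
Proof.
move=> x0 hd.
have a0 : 0 < N x := N_gt0 _ x0.
have Hg := (@HMI (N x) (N_ge0 x)).1.
have m0 : 0 < M (N x) (N x) by have := Mpos_xy _ _ (x_neq_oppx _ x0); rewrite NN.
have yx : x <> y by move=> e; move: hd; rewrite -e Nsub0; lra.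
have G0 := Mpos_xy _ _ yx.
rewrite /rhoM NB.
set a := N x in a0 hd m0 G0 Hg *; set d := N (y - x) in hd *.
have Ny : N y <= a + d.
  have := N_tri (y - x) x; rewrite subrK -/a -/d; lra.
have Ga : M a (N y) * a <= M a a * (a + d).
  have [le|lt] := lerP (N y) a.
    have := (proj1 Hg) _ _ (N_ge0 y) le => h; nra.
  have := @MI_ratio _ _ Hg a (N y) a0 (ltW lt) => h; nra.
have m4 : 0 < 4 * M a a by rewrite mulr_gt0.
rewrite ler_pdivrMr // mulrAC ler_pdivlMr //; nra.
Qed.

Lemma star_nonzero x : x <> 0 -> exists r0, 0 < r0 /\ forall r, 0 < r -> r < r0 -> ball_star_shaped ip rho x r.
Proof.
move=> x0.
have a0 : 0 < N x := N_gt0 _ x0.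
have Hg := (@HMI (N x) (N_ge0 x)).1.
have m0 : 0 < M (N x) (N x) by have := Mpos_xy _ _ (x_neq_oppx _ x0); rewrite NN.
have gp := gpos _ x0.
exists (N x / (4 * M (N x) (N x))); split; first by rewrite divr_gt0 ?mulr_gt0.
move=> r r0 rlt u u0.
have Nu0 : 0 < N u := N_gt0 _ u0.
pose f := fun t => rho x (x + t *: u).
have f0 : f 0 < r by rewrite /f scale0r addr0 rho_xx.
have B0 : 0 < N x / (3 * N u) by rewrite divr_gt0 ?mulr_gt0.
have BNu : N x / (3 * N u) * N u = N x / 3 by field; rewrite gt_eqF.
have HB : forall t, N x / (3 * N u) <= t -> ~ f t < r.
  move=> t Bt; have t0 : 0 <= t by apply: le_trans (ltW B0) Bt.
  have : N x / 3 <= N ((x + t *: u) - x).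
    rewrite Nray0' ger0_norm // -BNu; by rewrite ler_pM2r.
  move/(far _ _ x0); rewrite -/(f t); lra.
have [c0 cB Hout Hin] := @sup_ray _ f r _ f0 B0 HB.
set c := sup _ in c0 cB Hout Hin.
have cNu : c * N u <= N x / 3 by rewrite -BNu ler_pM2r.
have Hlt : forall t, 0 <= t -> t < c -> f t < r /\ 0 < N (x + t *: u).
  move=> t t0 tc; have [t2 tt2 [t2c [t20 ft2]]] := Hin t tc.
  have t2Nu : t2 * N u <= N x / 2.
    have : t2 * N u <= c * N u by rewrite ler_pM2r.
    lra.
  split; first exact: lt_trans (ray_mono _ _ _ _ x0 u0 t0 tt2 t2Nu) ft2.
  have := Nray_lb x u _ t0.
  have : t * N u <= c * N u by rewrite ler_pM2r // ltW.
  lra.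
apply: (@ray_unique rho x u r c) => //.
- move=> t t0 tc; have [ft Ny] := Hlt t t0 tc.
  exact: (cont_up (M (N x))) _ _ _ Hg gp Ny ft.
- move=> t t0 [tc|->]; first exact: (Hlt t t0 tc).1.
  exact: f0.
- move=> t ct.
  have t0 : 0 < t by apply: le_lt_trans ct.
  have [small|big] := lerP (t * N u) (N x / 2).
    set t1 := (c + t) / 2.
    have ct1 : c < t1 by rewrite /t1; lra.
    have t1t : t1 < t by rewrite /t1; lra.
    have ft1 := Hout t1 ct1.
    have := ray_mono _ _ _ _ x0 u0 (ltW (le_lt_trans c0 ct1)) t1t small.
    rewrite -/(f t1) -/(f t) => lt1.
    have rf : r < f t by rewrite ltNge; apply/negP => h; apply: ft1; lra.
    have Ny : 0 < N (x + t *: u) by have := Nray_lb x u _ (ltW t0); lra.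
    exact: (cont_lo (M (N x))) _ _ _ Hg gp Ny r0 rf.
  exists (N x / 6); first by rewrite divr_gt0.
  move=> z hz.
  have : N x / 3 <= N (z - x).
    have := N_tri ((x + t *: u) - z) (z - x).
    rewrite addrA subrK Nray0' ger0_norm ?(ltW t0) // [N (x + t *: u - z)]NB; lra.
  move/(far _ _ x0) => h; lra.
Qed.


Lemma star_zero : (exists e : V, e <> 0) -> exists r0, 0 < r0 /\
  forall r, 0 < r -> r < r0 -> ball_star_shaped ip rho 0 r.
Proof.
move=> [e e0].
pose h := fun s => s / M 0 s.
have Hg := (@HMI 0 (lexx 0)).1.
have hge0 : forall s, 0 <= s -> 0 <= h s.
  by move=> s s0; rewrite /h divr_ge0 // HM0.
have hmono : forall s s', 0 <= s -> s <= s' -> h s <= h s'.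
  move=> s s' s0 ss'.
  have s'0 : 0 <= s' by apply: le_trans ss'.
  have [sz|spos] := lerP s 0.
    have -> : s = 0 by apply/eqP; rewrite eq_le sz s0.
    by apply: le_trans (hge0 _ s'0); rewrite /h mul0r.
  have [mz|mpos] := lerP (M 0 s) 0.
    have ez : M 0 s = 0 by apply/eqP; rewrite eq_le mz HM0.
    by apply: le_trans (hge0 _ s'0); rewrite /h ez invr0 mulr0.
  have mle := (proj1 Hg) _ _ s0 ss'.
  have m'pos : 0 < M 0 s' by apply: lt_le_trans mle.
  have ratio := @MI_ratio _ _ Hg s s' spos ss'.
  rewrite /h ler_pdivrMr // mulrAC ler_pdivlMr //; nra.
have rho0 : forall w, rho 0 w = h (N w) by move=> w; rewrite /rhoM sub0r NN N0.
have Ne0 : 0 < N e := N_gt0 _ e0.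
have Me0 : 0 < M 0 (N e).
  have := Mpos_xy 0 e (fun h => e0 (esym h)); by rewrite N0.
exists (h (N e)); split; first by rewrite /h divr_gt0.
move=> r r0 rlt u u0.
have Nu0 : 0 < N u := N_gt0 _ u0.
pose f := fun t => rho 0 (0 + t *: u).
have fE : forall t, 0 <= t -> f t = h (t * N u).
  by move=> t t0; rewrite /f rho0 add0r NZ ger0_norm.
have f0 : f 0 < r by rewrite /f scale0r addr0 rho_xx.
have B0 : 0 < N e / N u by rewrite divr_gt0.
have BNu : N e / N u * N u = N e by rewrite divfK // gt_eqF.
have HB : forall t, N e / N u <= t -> ~ f t < r.
  move=> t Bt; have t0 : 0 <= t by apply: le_trans (ltW B0) Bt.
  rewrite fE //.
  have : N e <= t * N u by rewrite -BNu ler_pM2r.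
  move/(hmono _ _ (ltW Ne0)); lra.
have [c0 cB Hout Hin] := @sup_ray _ f r _ f0 B0 HB.
set c := sup _ in c0 cB Hout Hin.
have H1 : forall t, 0 <= t -> t < c -> exists2 e, 0 < e &
     forall w, N (w - (0 + t *: u)) < e -> rho 0 w < r.
  move=> t t0 tc; have [t2 tt2 [t2c [t20 ft2]]] := Hin t tc.
  exists ((t2 - t) * N u); first by rewrite mulr_gt0 // subr_gt0.
  move=> w hw; rewrite rho0.
  have : N w <= t2 * N u.
    have := N_tri (w - (0 + t *: u)) (0 + t *: u); rewrite subrK add0r NZ ger0_norm //.
    rewrite add0r in hw; lra.
  move/(hmono _ _ (N_ge0 w)); rewrite -fE //; lra.
apply: (@ray_unique rho 0 u r c) => //.
- move=> t t0 [tc|->]; last by rewrite scale0r addr0 rho_xx.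
  have [e' e'0 He'] := H1 t t0 tc.
  by apply: He'; rewrite Nsub0.
- move=> t ct.
  have t0 : 0 < t by apply: le_lt_trans ct.
  set t1 := (c + t) / 2.
  have ct1 : c < t1 by rewrite /t1; lra.
  have t1t : t1 < t by rewrite /t1; lra.
  have t10 : 0 <= t1 by apply: ltW (le_lt_trans c0 ct1).
  have ft1 := Hout t1 ct1.
  have rf : r <= h (t1 * N u) by rewrite -fE // leNgt; apply/negP.
  exists ((t - t1) * N u); first by rewrite mulr_gt0 // subr_gt0.
  move=> z hz; rewrite rho0.
  have : t1 * N u <= N z.
    have := N_rev (0 + t *: u) z; rewrite add0r NZ ger0_norm ?(ltW t0) // NB.
    rewrite add0r in hz; lra.
  move/(hmono _ _ (mulr_ge0 t10 (ltW Nu0))); lra.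
Qed.

End IP.

Theorem lemma5p4 (R : realType) (V : lmodType R) (ip : V -> V -> R)
  (M : R -> R -> R) :
  is_inner_product ip ->
  (exists x : V, x <> 0) ->
  (forall s t, 0 <= s -> 0 <= t -> 0 <= M s t) ->
  (forall s t, 0 <= s -> 0 <= t -> M s t = M t s) ->
  moderately_increasing2 M ->
  is_metric (rhoM ip M) ->
  locally_star_shaped ip (rhoM ip M).
Proof.
move=> Hip Hne HM0 Hsym HMI Hmet x.
have [->|x0] := eqVneq x 0.
  exact: (@star_zero R V ip Hip M HM0 HMI Hmet Hne).
exact: (@star_nonzero R V ip Hip M HM0 HMI Hmet x (elimN eqP x0)).
Qed.
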